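(* Let $P_1,P_2$ be distinct points of $\mathrm{PG}(6,q)$ and let $E_1,E_2,E_3$ be planes such that $E_i\cap E_j=P_1$ and $P_2\notin\langle E_i,E_j\rangle$ for all distinct $i,j\in\{1,2,3\}$. Let $\mathcal{S}$ be the set of all solids $S$ of $\mathrm{PG}(6,q)$ with $P_2\in S$ and $S\cap E_i\neq\emptyset$ for all $i\in\{1,2,3\}$. Then $|\mathcal{S}|\le 3q^6+6q^5+7q^4+4q^3+2q^2+q+1$.
   Context: Dimensions are projective (planes 2, solids 3); $\langle\cdot\rangle$ denotes the span. *)

(* Defs.v *)
From HB Require Import structures.
From mathcomp Require Import all_boot all_order all_algebra.
Set Implicit Arguments. Unset Strict Implicit. Unset Printing Implicit Defensive.
Import GRing.Theory.
Local Open Scope ring_scope.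

(* PG(n-1, F) is modelled by the lattice of row spaces of 'rV[F]_n.
   A projective subspace of projective dimension d is a vector subspace of
   rank d+1.  Subspaces are represented canonically by square matrices
   S : 'M[F]_n with S = <<S>>%MS (genmx), so distinct subspaces are
   distinct matrices and the set of subspaces can be counted. *)

Definition is_subspace (F : fieldType) (n : nat) (S : 'M[F]_n) : bool :=
  S == genmx S.

Definition solids_set (F : finFieldType) (p2 : 'rV[F]_7)
    (E : 'I_3 -> 'M[F]_(3,7)) : {set 'M[F]_7} :=
  [set S : 'M[F]_7 | [&& is_subspace S, \rank S == 4%N, (p2 <= S)%MS &
       [forall i : 'I_3, (0 < \rank (S :&: E i)%MS)%N]]].

(* Main.v *)
Require Import Defs.
From HB Require Import structures.
From mathcomp Require Import all_boot all_order all_algebra.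
From mathcomp Require Import ring lra zify.
Set Implicit Arguments. Unset Strict Implicit. Unset Printing Implicit Defensive.
Import GRing.Theory.
Lemma subE a b c : b + c = a -> a - b = c.
Proof. by move=> <-; rewrite addKn. Qed.

Lemma div_bound a c P W : 0 < c -> W = P * c -> a * c <= W -> a <= P.
Proof. by move=> c0 ->; rewrite leq_pmul2r. Qed.

Lemma arA q a : 1 < q ->
  a * ((q ^ 4 - q ^ 2) * (q ^ 4 - q ^ 3)) <= (q ^ 7 - q ^ 2) * (q ^ 7 - q ^ 3) ->
  a <= (q ^ 2 + 1) * (q ^ 4 + q ^ 3 + q ^ 2 + q + 1).
Proof.
case: q => [|[|r]] // _; have -> : r.+2 = r + 2 by rewrite addn2.
rewrite (@subE _ _ ((r+2)^2 * (r+1) * (r+3))); last by ring.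
rewrite (@subE _ _ ((r+2)^3 * (r+1))); last by ring.
set Q := (r + 2).
rewrite (@subE _ _ (Q^2 * (r+1) * (Q^4 + Q^3 + Q^2 + Q + 1))); last by rewrite /Q; ring.
rewrite (@subE _ _ (Q^3 * (r+1) * (Q^3 + Q^2 + Q + 1))); last by rewrite /Q; ring.
apply: div_bound; last by rewrite /Q; ring.
rewrite /Q; lia.
Qed.

Lemma arB q b : 1 < q -> b * (q - 1) ^ 3 <= (q ^ 3 - q ^ 1) ^ 3 -> b <= (q ^ 2 + q) ^ 3.
Proof.
case: q => [|[|r]] // _; have -> : r.+2 = r + 2 by rewrite addn2.
rewrite (@subE _ _ (r+1)); last by ring.
rewrite (@subE _ _ ((r+2) * (r+1) * (r+3))); last by ring.
apply: div_bound; last by ring.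
lia.
Qed.

Lemma arT q t : 1 < q -> t * (q ^ 1 - q ^ 0) <= (q ^ 3 - q ^ 1) * q -> t <= q ^ 3 + q ^ 2.
Proof.
case: q => [|[|r]] // _; have -> : r.+2 = r + 2 by rewrite addn2.
rewrite (@subE _ _ (r+1)); last by ring.
rewrite (@subE _ _ ((r+2) * (r+1) * (r+3))); last by ring.
apply: div_bound; last by ring.
lia.
Qed.

Lemma arG q g k : 1 < q -> k <= 4 -> 2 <= k -> g * (q ^ 3 - q ^ 2) <= q ^ k - q ^ 2 -> g <= q + 1.
Proof.
move=> q1 k4 k2 h.
have h2 : q ^ k - q ^ 2 <= q ^ 4 - q ^ 2 by apply: leq_sub2r; rewrite leq_exp2l.
move: (leq_trans h h2); clear h h2; move: q1.
case: q => [|[|r]] // _; have -> : r.+2 = r + 2 by rewrite addn2.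
rewrite (@subE _ _ ((r+2)^2 * (r+1))); last by ring.
rewrite (@subE _ _ ((r+2)^2 * (r+1) * (r+3))); last by ring.
apply: div_bound; last by ring.
lia.
Qed.

Lemma arS q s : 1 < q -> s * (q ^ 4 - q ^ 3) <= q ^ 7 - q ^ 3 -> s <= q ^ 3 + q ^ 2 + q + 1.
Proof.
case: q => [|[|r]] // _; have -> : r.+2 = r + 2 by rewrite addn2.
set Q := r + 2.
rewrite (@subE _ _ (Q^3 * (r+1))); last by rewrite /Q; ring.
rewrite (@subE _ _ (Q^3 * (r+1) * (Q^3 + Q^2 + Q + 1))); last by rewrite /Q; ring.
apply: div_bound; last by rewrite /Q; ring.
rewrite /Q; lia.
Qed.

Lemma arFinal q a b t :
  a <= (q ^ 2 + 1) * (q ^ 4 + q ^ 3 + q ^ 2 + q + 1) -> b <= (q ^ 2 + q) ^ 3 ->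
  t <= (q ^ 3 + q ^ 2) * (q ^ 3 + q ^ 2 + q) ->
  a + b + t <= 3 * q ^ 6 + 6 * q ^ 5 + 7 * q ^ 4 + 4 * q ^ 3 + 2 * q ^ 2 + q + 1.
Proof.
move=> ha hb ht.
have -> : 3 * q ^ 6 + 6 * q ^ 5 + 7 * q ^ 4 + 4 * q ^ 3 + 2 * q ^ 2 + q + 1 =
  (q ^ 2 + 1) * (q ^ 4 + q ^ 3 + q ^ 2 + q + 1) + (q ^ 2 + q) ^ 3 +
   (q ^ 3 + q ^ 2) * (q ^ 3 + q ^ 2 + q) by ring.
by rewrite !leq_add.
Qed.

Local Open Scope ring_scope.

Section M.
Lemma dcount (A B : finType) (As : {set A}) (Bs : {set B}) (R : A -> B -> bool) c d :
 (forall b, b \in Bs -> c <= #|[set a in As | R a b]|)%N ->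
 (forall a, a \in As -> #|[set b in Bs | R a b]| <= d)%N ->
 (#|Bs| * c <= #|As| * d)%N.
Proof.
move=> hc hd.
have cE (T : finType) (S : {set T}) (P : pred T) :
    #|[set x in S | P x]| = (\sum_(x in S) (P x : nat))%N.
  rewrite -sum1_card big_mkcond /= [RHS]big_mkcond /=; apply: eq_bigr => x _.
  by rewrite inE; case: (x \in S); case: (P x).
rewrite mulnC -sum_nat_const mulnC -sum_nat_const.
apply: (@leq_trans (\sum_(b in Bs) \sum_(a in As) (R a b : nat))).
  by apply: leq_sum => b hb; rewrite -cE; apply: hc.
rewrite exchange_big /=; apply: leq_sum => a ha; rewrite -cE; exact: hd.
Qed.


Context (F : finFieldType).

Lemma card_subsp n m (A : 'M[F]_(m, n)) :
  #|[set v : 'rV[F]_n | (v <= A)%MS]| = (#|F| ^ \rank A)%N.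
Proof.
have -> : [set v : 'rV[F]_n | (v <= A)%MS] =
    [set x *m row_base A | x in [set: 'rV[F]_(\rank A)]].
  apply/setP => v; rewrite inE; apply/idP/imsetP.
    by rewrite -(eq_row_base A) => /submxP[x ->]; exists x; rewrite ?inE.
  by case=> x _ ->; rewrite -(eq_row_base A) submxMl.
rewrite card_imset; last exact: row_free_inj (row_base_free A).
by rewrite cardsT card_mx mul1n.
Qed.

Lemma sub_rank_eq m1 m2 n (A : 'M[F]_(m1, n)) (B : 'M[F]_(m2, n)) :
  (A <= B)%MS -> (\rank B <= \rank A)%N -> (B <= A)%MS.
Proof.
move=> sAB hr; have := mxrank_leqif_sup sAB => -[_ <-].
by rewrite eqn_leq hr mxrankS.
Qed.

Lemma rank_add_notin n m (A : 'M[F]_(m, n)) (v : 'rV[F]_n) :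
  ~~ (v <= A)%MS -> \rank (A + v)%MS = (\rank A).+1.
Proof.
move=> hv.
have v0 : v != 0 by apply: contraNneq hv => ->; rewrite sub0mx.
have := mxrank_sum_cap A v; rewrite rank_rV v0.
have -> : \rank (A :&: v)%MS = 0%N.
  apply/eqP; rewrite eqn_leq leq0n andbT leqNgt; apply/negP => h.
  have h1 : (\rank v <= \rank (A :&: v))%N by rewrite rank_rV v0.
  have := sub_rank_eq (capmxSr A v) h1 => /(submx_trans)/(_ (capmxSl A v)).
  by rewrite (negbTE hv).
by rewrite addn0 addn1.
Qed.

Lemma rank_add_in n m (A : 'M[F]_(m, n)) (v : 'rV[F]_n) :
  (v <= A)%MS -> \rank (A + v)%MS = \rank A.
Proof.
move=> hv; by move/addsmx_idPl: hv => ->.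
Qed.

Lemma genmx_eq n m (A : 'M[F]_(m, n)) (X : 'M[F]_n) :
  is_subspace X -> (A <= X)%MS -> (\rank X <= \rank A)%N -> <<A>>%MS = X.
Proof.
move=> /eqP hX sAX hr; rewrite hX; apply: eq_genmx; apply/eqmxP.
by rewrite sAX sub_rank_eq.
Qed.

Lemma genmx_sub_eq n m (A : 'M[F]_(m, n)) :  is_subspace <<A>>%MS.
Proof. by rewrite /is_subspace genmx_id. Qed.

Lemma rv_sub_rv n (u v : 'rV[F]_n) : u != 0 -> (u <= v)%MS -> (v <= u)%MS.
Proof.
move=> u0 s; apply: sub_rank_eq s _; rewrite !rank_rV u0.
by case: (v != 0).
Qed.

Lemma nz_vec_in n m (A : 'M[F]_(m, n)) : (0 < \rank A)%N ->
  exists2 v : 'rV[F]_n, v != 0 & (v <= A)%MS.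
Proof.
rewrite lt0n mxrank_eq0 => /eqP hA.
have [i hi] : exists i, row i A != 0.
  apply/existsP; rewrite -negb_forall; apply/negP => /forallP h.
  by apply: hA; apply/row_matrixP => i; rewrite row0; apply/eqP; exact: h.
by exists (row i A) => //; exact: row_sub.
Qed.


Lemma cardE_sum (T : finType) (S : {set T}) (P : pred T) :
    #|[set x in S | P x]| = (\sum_(x in S) (P x : nat))%N.
Proof.
rewrite -sum1_card big_mkcond /= [RHS]big_mkcond /=; apply: eq_bigr => x _.
by rewrite inE; case: (x \in S); case: (P x).
Qed.

Lemma card_sub_diff n m1 m2 (A : 'M[F]_(m1, n)) (B : 'M[F]_(m2, n)) :
  (B <= A)%MS ->
  #|[set v : 'rV[F]_n | (v <= A)%MS && ~~ (v <= B)%MS]| =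
  (#|F| ^ \rank A - #|F| ^ \rank B)%N.
Proof.
move=> sBA.
have -> : [set v : 'rV[F]_n | (v <= A)%MS && ~~ (v <= B)%MS] =
   [set v : 'rV[F]_n | (v <= A)%MS] :\: [set v : 'rV[F]_n | (v <= B)%MS].
  by apply/setP => v; rewrite !inE andbC.
rewrite cardsDS ?card_subsp //.
apply/subsetP => v; rewrite !inE => h; exact: submx_trans h sBA.
Qed.

Lemma card_notin n m (B : 'M[F]_(m, n)) :
  #|[set v : 'rV[F]_n | ~~ (v <= B)%MS]| = (#|F| ^ n - #|F| ^ \rank B)%N.
Proof.
have := card_sub_diff (submx1 B); rewrite mxrank1 => <-.
by apply: eq_card => v; rewrite !inE submx1.
Qed.

Lemma card_pair (A B : finType) (P : pred A) (Q : A -> pred B) c :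
  (forall a, P a -> #|[set b | Q a b]| = c) ->
  #|[set ab : A * B | P ab.1 && Q ab.1 ab.2]| = (#|[set a | P a]| * c)%N.
Proof.
move=> hc.
transitivity (\sum_(ab : A * B) ((P ab.1 && Q ab.1 ab.2) : nat))%N.
  by rewrite -sum1_card big_mkcond; apply: eq_bigr => ab _; rewrite inE; case: (_ && _).
rewrite -(pair_bigA _ (fun a b => ((P a && Q a b) : nat))) /=.
transitivity (\sum_(a : A) (if P a then c else 0))%N.
  apply: eq_bigr => a _; case: ifP => pa /=; last by rewrite big1.
  by rewrite -(hc a pa) -sum1_card [RHS]big_mkcond; apply: eq_bigr => b _; rewrite inE.
rewrite -big_mkcond /= sum_nat_const (@eq_card A P [set a | P a]) //.
by move=> a; rewrite inE.
Qed.

Definition oneup n (M K : 'M[F]_n) : {set 'M[F]_n} :=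
  [set X : 'M[F]_n | [&& is_subspace X, \rank X == (\rank M).+1,
                         (M <= X)%MS & (X <= K)%MS]].

Lemma countG n (M K : 'M[F]_n) : (M <= K)%MS ->
  (#|oneup M K| * (#|F| ^ (\rank M).+1 - #|F| ^ \rank M)
     <= #|F| ^ \rank K - #|F| ^ \rank M)%N.
Proof.
move=> sMK.
set W := [set v : 'rV[F]_n | (v <= K)%MS && ~~ (v <= M)%MS].
have := @dcount _ _ W (oneup M K) (fun v X => (v <= X)%MS)
   (#|F| ^ (\rank M).+1 - #|F| ^ \rank M)%N 1%N.
rewrite muln1 /W card_sub_diff //; apply.
  move=> X; rewrite inE => /and4P[hX /eqP rX sMX sXK].
  rewrite -rX -card_sub_diff //; apply: subset_leq_card; apply/subsetP => v.
  by rewrite !inE => /andP[vX vM]; rewrite vX vM (submx_trans vX sXK).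
move=> v; rewrite inE => /andP[vK vM].
apply: (@leq_trans #|[set <<(M + v)%MS>>%MS]|); last by rewrite cards1.
apply: subset_leq_card; apply/subsetP => X.
rewrite !inE => /andP[/and4P[hX /eqP rX sMX sXK] vX]; apply/eqP.
by apply/esym/genmx_eq => //; rewrite ?addsmx_sub ?sMX // rX rank_add_notin.
Qed.

Definition twoup n (M : 'M[F]_n) : {set 'M[F]_n} :=
  [set X : 'M[F]_n | [&& is_subspace X, \rank X == (\rank M).+2 & (M <= X)%MS]].

Lemma countG2 n (M : 'M[F]_n) :
  (#|twoup M| * ((#|F| ^ (\rank M).+2 - #|F| ^ \rank M) *
                 (#|F| ^ (\rank M).+2 - #|F| ^ (\rank M).+1))
     <= (#|F| ^ n - #|F| ^ \rank M) * (#|F| ^ n - #|F| ^ (\rank M).+1))%N.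
Proof.
set W := [set uv : 'rV[F]_n * 'rV[F]_n | ~~ (uv.1 <= M)%MS && ~~ (uv.2 <= M + uv.1)%MS].
have cW : #|W| = ((#|F| ^ n - #|F| ^ \rank M) * (#|F| ^ n - #|F| ^ (\rank M).+1))%N.
  rewrite (@card_pair _ _ (fun u => ~~ (u <= M)%MS) (fun u v => ~~ (v <= M + u)%MS)
        (#|F| ^ n - #|F| ^ (\rank M).+1)%N).
    by rewrite card_notin.
  by move=> u hu; rewrite -(rank_add_notin hu) card_notin.
have := @dcount _ _ W (twoup M) (fun uv X => (uv.1 <= X)%MS && (uv.2 <= X)%MS)
   ((#|F| ^ (\rank M).+2 - #|F| ^ \rank M) *
                 (#|F| ^ (\rank M).+2 - #|F| ^ (\rank M).+1))%N 1%N.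
rewrite muln1 -cW; apply.
  move=> X; rewrite inE => /and3P[hX /eqP rX sMX].
  have -> : [set uv in W | (uv.1 <= X)%MS && (uv.2 <= X)%MS] =
     [set uv : 'rV[F]_n * 'rV[F]_n | ((uv.1 <= X)%MS && ~~ (uv.1 <= M)%MS) &&
                         ((uv.2 <= X)%MS && ~~ (uv.2 <= M + uv.1)%MS)].
    by apply/setP => -[u v]; rewrite !inE /=; do 4!case: (_ <= _)%MS.
  rewrite (@card_pair _ _ (fun u => (u <= X)%MS && ~~ (u <= M)%MS)
     (fun u v => (v <= X)%MS && ~~ (v <= M + u)%MS)
        (#|F| ^ (\rank M).+2 - #|F| ^ (\rank M).+1)%N).
    by rewrite -rX card_sub_diff.
  move=> u /andP[uX uM]; rewrite card_sub_diff ?rX ?rank_add_notin //.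
  by rewrite addsmx_sub sMX uX.
move=> [u v]; rewrite inE /= => /andP[uM vMu].
apply: (@leq_trans #|[set <<(M + u + v)%MS>>%MS]|); last by rewrite cards1.
apply: subset_leq_card; apply/subsetP => X.
rewrite !inE /= => /andP[/and3P[hX /eqP rX sMX] /andP[uX vX]]; apply/eqP.
apply/esym/genmx_eq => //; first by rewrite !addsmx_sub sMX uX vX.
by rewrite rX !rank_add_notin.
Qed.

End M.

Notation o0 := (@Ordinal 3 0 isT).
Notation o1 := (@Ordinal 3 1 isT).
Notation o2 := (@Ordinal 3 2 isT).

Lemma ord3 (i : 'I_3) : [\/ i = o0, i = o1 | i = o2].
Proof.
case: i => [[|[|[|m]]] hm].
- by apply: Or31; apply: val_inj.
- by apply: Or32; apply: val_inj.
- by apply: Or33; apply: val_inj.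
- by [].
Qed.

Theorem lemma4p2 (F : finFieldType) (q : nat) (hq : #|F| = q)
  (p1 p2 : 'rV[F]_7) (E : 'I_3 -> 'M[F]_(3,7))
  (hp1 : p1 != 0) (hp2 : p2 != 0) (hp12 : ~~ (p1 == p2)%MS)
  (hE : forall i, \rank (E i) = 3%N)
  (hEE : forall i j, i != j -> (E i :&: E j == p1)%MS)
  (hP2 : forall i j, i != j -> ~~ (p2 <= E i + E j)%MS) :
  (#|solids_set p2 E| <=
     3 * q ^ 6 + 6 * q ^ 5 + 7 * q ^ 4 + 4 * q ^ 3 + 2 * q ^ 2 + q + 1)%N.
Proof.
have rk := @rank_add_notin F 7.
have q1 : (1 < q)%N by rewrite -hq card_finNzRing_gt1.
have capP : forall i j (x : 'rV[F]_7), i != j -> (x <= E i)%MS -> (x <= E j)%MS -> (x <= p1)%MS.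
  move=> i j x ij xi xj; case/andP: (hEE i j ij) => h _.
  by apply: submx_trans h; rewrite sub_capmx xi xj.
have pE : forall i, (p1 <= E i)%MS.
  move=> i; have [j ij] : exists j, i != j.
    by case: (ord3 i) => ->; [exists o1 | exists o0 | exists o0].
  case/andP: (hEE i j ij) => _ h; exact: submx_trans h (capmxSl _ _).
have r1 : \rank p1 = 1%N by rewrite rank_rV hp1.
have r2 : \rank p2 = 1%N by rewrite rank_rV hp2.
have nzsub : forall (x y : 'rV[F]_7), x != 0 -> (x <= y)%MS -> (y <= x)%MS.
  by move=> x y; apply: rv_sub_rv.
have notp1 : forall (x : 'rV[F]_7) m (S : 'M[F]_(m, 7)), x != 0 -> (x <= S)%MS ->
    ~~ (p1 <= S)%MS -> ~~ (x <= p1)%MS.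
  move=> x m S x0 xS p1S; apply/negP => xp.
  by move: p1S; rewrite (submx_trans (nzsub _ _ x0 xp) xS).
pose Sset := solids_set p2 E.
pose L := (p1 + p2)%MS.
pose SA := [set S in Sset | (p1 <= S)%MS].
pose good i (x : 'rV[F]_7) := (x <= E i)%MS && ~~ (x <= p1)%MS.
pose W3 := [set w : 'rV[F]_7 * 'rV[F]_7 * 'rV[F]_7 |
              (good o0 w.1.1 && good o1 w.1.2) && good o2 w.2].
pose fB (w : 'rV[F]_7 * 'rV[F]_7 * 'rV[F]_7) := <<(w.1.1 + w.1.2 + p2 + w.2)%MS>>%MS.
pose SB1 := [set S in Sset | ~~ (p1 <= S)%MS && [exists w in W3, fB w == S]].
pose SB2 := [set S in Sset | ~~ (p1 <= S)%MS && ~~ [exists w in W3, fB w == S]].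
pose TT := [set T : 'M[F]_7 | [&& is_subspace T, \rank T == 3%N, (p2 <= T)%MS,
                 ~~ (p1 <= T)%MS & [forall i, (0 < \rank (T :&: E i))%N]]].
have cgood : forall i, #|[set x | good i x]| = (#|F| ^ 3 - #|F| ^ 1)%N.
  by move=> i; rewrite card_sub_diff // hE r1.
have hA : (#|SA| <= (q ^ 2 + 1) * (q ^ 4 + q ^ 3 + q ^ 2 + q + 1))%N.
  apply: arA q1 _; rewrite -hq.
  have rL : \rank L = 2%N.
    rewrite /L rk ?r1 //; apply/negP => h.
    by move: hp12; rewrite /= (nzsub _ _ hp2 h) h.
  have := countG2 L; rewrite rL => h; apply: leq_trans h.
  apply: leq_mul (leqnn _); apply: subset_leq_card; apply/subsetP => S.
  rewrite !inE => /andP[/and4P[hS rS p2S _] p1S].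
  by rewrite hS rL rS addsmx_sub p1S p2S.
have hB1 : (#|SB1| <= (q ^ 2 + q) ^ 3)%N.
  apply: arB q1 _; rewrite -hq.
  have cW3 : #|W3| = ((#|F| ^ 3 - #|F| ^ 1) ^ 3)%N.
    rewrite (@card_pair _ _ (fun w1 : 'rV[F]_7 * 'rV[F]_7 => good o0 w1.1 && good o1 w1.2)
                 (fun _ x => good o2 x) (#|F| ^ 3 - #|F| ^ 1)%N); last by move=> *; exact: cgood.
    rewrite (@card_pair _ _ (fun x => good o0 x) (fun _ x => good o1 x) (#|F| ^ 3 - #|F| ^ 1)%N);
      last by move=> *; exact: cgood.
    by rewrite cgood; set a := (_ - _)%N; rewrite -!mulnA !expnS expn0 muln1.
  rewrite -cW3 -(muln1 #|W3|).
  apply: (@dcount _ _ W3 SB1 (fun w S => fB w == S)).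
    move=> S; rewrite inE => /andP[_ /andP[_ /exists_inP[w wW /eqP fw]]].
    pose nz := [set c : F | c != 0].
    have cnz : #|nz| = (#|F| - 1)%N.
      rewrite subn1 -(cardC1 (0 : F)); apply: eq_card => c; by rewrite !inE.
    pose sc (c : F * F * F) := (c.1.1 *: w.1.1, c.1.2 *: w.1.2, c.2 *: w.2).
    have wnz : [/\ w.1.1 != 0, w.1.2 != 0 & w.2 != 0].
      move: wW; rewrite inE => /andP[/andP[/andP[_ a] /andP[_ b]] /andP[_ c]].
      by split; [move: a | move: b | move: c]; apply: contraNneq => ->; rewrite sub0mx.
    have scI : forall (x : 'rV[F]_7) (a b : F), x != 0 -> a *: x = b *: x -> a = b.
      move=> x a b x0 /eqP; rewrite -subr_eq0 -scalerBl scaler_eq0 (negbTE x0) orbF subr_eq0.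
      by move/eqP.
    apply: (@leq_trans #|[set sc c | c in setX (setX nz nz) nz]|).
      rewrite card_in_imset; first by rewrite !cardsX cnz; set a := (_ - 1)%N; rewrite -!mulnA !expnS expn0 muln1.
      case: wnz => a b c [[c1 c2] c3] [[d1 d2] d3] _ _ [] e1 e2 e3.
      by rewrite (scI _ _ _ a e1) (scI _ _ _ b e2) (scI _ _ _ c e3).
    apply: subset_leq_card; apply/subsetP => w'; case/imsetP => -[[c1 c2] c3].
    rewrite !inE /= => /andP[/andP[c10 c20] c30] ->.
    have gs : forall i (c : F) (x : 'rV[F]_7), c != 0 -> good i x -> good i (c *: x).
      by move=> i c x c0; rewrite /good !(eqmx_scale _ c0).
    move: wW; rewrite inE => /andP[/andP[g1 g2] g3].
    rewrite /sc /= !gs //= -fw /fB /=; apply/eqP; apply: eq_genmx.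
    apply: adds_eqmx; last exact: eqmx_scale.
    apply: adds_eqmx; last exact: eqmx_refl.
    by apply: adds_eqmx; apply: eqmx_scale.
  move=> w _; apply: (@leq_trans #|[set fB w]|); last by rewrite cards1.
  by apply: subset_leq_card; apply/subsetP => S; rewrite !inE => /andP[_ /eqP <-].
have hTT : (#|TT| <= q ^ 3 + q ^ 2)%N.
  have q1c := q1; apply: arT q1c _; rewrite -hq -(cgood o2).
  apply: (@dcount _ _ [set x | good o2 x] TT (fun x T => (x <= T)%MS)).
    move=> T; rewrite inE => /and5P[hT rT p2T p1T /forallP hi].
    have h2 := hi o2.
    apply: (@leq_trans #|[set x : 'rV[F]_7 | (x <= T :&: E o2)%MS && ~~ (x <= (0 : 'rV[F]_7))%MS]|).
      rewrite card_sub_diff ?sub0mx // mxrank0.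
      by apply: leq_sub2r; apply: leq_pexp2l; [rewrite hq; exact: ltnW q1 | exact: h2].
    apply: subset_leq_card; apply/subsetP => x; rewrite !inE => /andP[xTE x00].
    have x0 : x != 0 by apply: contraNneq x00 => ->; rewrite sub0mx.
    have xT : (x <= T)%MS by apply: submx_trans xTE (capmxSl _ _).
    have xE : (x <= E o2)%MS by apply: submx_trans xTE (capmxSr _ _).
    by rewrite /good xE xT (notp1 _ _ _ x0 xT p1T).
  move=> x; rewrite inE => /andP[xE xp1].
  have x0 : x != 0 by apply: contraNneq xp1 => ->; rewrite sub0mx.
  pose M := (p2 + x)%MS.
  have xp2 : ~~ (x <= p2)%MS.
    apply/negP => h; move: (hP2 o0 o2 isT); rewrite (submx_trans (nzsub _ _ x0 h)) //.
    exact: submx_trans xE (addsmxSr _ _).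
  have rM : \rank M = 2%N by rewrite /M rk ?r2.
  have EjM : forall j, j != o2 -> \rank (E j + M)%MS = 5%N /\ \rank (E j :&: M)%MS = 0%N.
    move=> j j2.
    have xEj : ~~ (x <= E j)%MS.
      by apply: contra xp1 => h; apply: (capP j o2).
    have rEx : \rank (E j + x)%MS = 4%N by rewrite rk ?hE.
    have p2Ex : ~~ (p2 <= E j + x)%MS.
      apply: contra (hP2 j o2 j2) => h; apply: submx_trans h _.
      by apply: addsmxS => //; exact: submx_refl.
    have rEM : \rank (E j + M)%MS = 5%N.
      by rewrite /M (addsmxC p2 x) addsmxA rk ?rEx.
    split=> //; have := mxrank_sum_cap (E j) M; rewrite rEM hE rM; lia.
  have EjM0 : forall j (y : 'rV[F]_7), j != o2 -> (y <= E j)%MS -> (y <= M)%MS -> y = 0.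
    move=> j y j2 yE yM; apply/eqP; rewrite -mxrank_eq0 -leqn0.
    case: (EjM j j2) => _ h0.
    have : (\rank y <= \rank (E j :&: M))%N by apply: mxrankS; rewrite sub_capmx yE yM.
    by rewrite h0.
  pose K := ((E o0 + M) :&: (E o1 + M))%MS.
  have MK : (M <= K)%MS by rewrite sub_capmx !addsmxSr.
  have p1M : ~~ (p1 <= M)%MS.
    by apply/negP => h; move: hp1; rewrite (EjM0 o0 p1 isT (pE o0) h) eqxx.
  have rK : (\rank K <= 4)%N.
    have := mxrank_sum_cap (E o0 + M)%MS (E o1 + M)%MS.
    case: (EjM o0 isT) => -> _; case: (EjM o1 isT) => -> _.
    have r6 : \rank (E o0 + E o1 + p2)%MS = 6%N.
      rewrite rk ?hP2 //; have := mxrank_sum_cap (E o0) (E o1).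
      have /eqmx_rank -> := hEE o0 o1 isT.
      rewrite !hE r1; lia.
    have : (\rank (E o0 + E o1 + p2)%MS <= \rank ((E o0 + M) + (E o1 + M))%MS)%N.
      apply: mxrankS; rewrite !addsmx_sub.
      rewrite (submx_trans _ (addsmxSl _ _)) ?addsmxSl //=.
      apply/andP; split; first exact: submx_trans (addsmxSl _ M) (addsmxSr _ _).
      apply: submx_trans (addsmxSl p2 x) _.
      exact: submx_trans (addsmxSr (E o0) _) (addsmxSl _ _).
    rewrite r6 /K.
    lia.
  have hG := countG MK; rewrite rM hq in hG.
  have k2 : (2 <= \rank K)%N by have := mxrankS MK; rewrite rM.
  have hG' := arG q1 rK k2 hG.
  apply: (@leq_trans #|oneup M K :\ <<(M + p1)%MS>>%MS|).
    apply: subset_leq_card; apply/subsetP => T; rewrite !inE.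
    case/andP=> /and5P[hT rT p2T p1T /forallP hi] xT.
    have MT : (M <= T)%MS by rewrite addsmx_sub p2T xT.
    have TEj : forall j, j != o2 -> (T <= E j + M)%MS.
      move=> j j2; have [y y0 yTE] := nz_vec_in (hi j).
      have yT : (y <= T)%MS by apply: submx_trans yTE (capmxSl _ _).
      have yE : (y <= E j)%MS by apply: submx_trans yTE (capmxSr _ _).
      have yM : ~~ (y <= M)%MS by apply/negP => h; move: y0; rewrite (EjM0 j y j2 yE h) eqxx.
      have sT : (T <= M + y)%MS.
        apply: sub_rank_eq; first by rewrite addsmx_sub MT yT.
        by rewrite rk // rM (eqP rT).
      apply: submx_trans sT _; rewrite addsmx_sub addsmxSr /=.
      exact: submx_trans yE (addsmxSl _ _).
    rewrite hT (eqP rT) rM eqxx MT sub_capmx !TEj //= andbT.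
    apply/eqP => eT; move: p1T; rewrite eT genmxE addsmxSr.
    done.
  have memX : <<(M + p1)%MS>>%MS \in oneup M K.
    rewrite /oneup inE genmx_sub_eq /= !genmxE rk // rM eqxx addsmxSl /=.
    rewrite addsmx_sub MK /= sub_capmx.
    rewrite (submx_trans (pE o0) (addsmxSl _ _)) (submx_trans (pE o1) (addsmxSl _ _)).
    done.
  by move: hG'; rewrite (cardsD1 <<(M + p1)%MS>>%MS (oneup M K)) memX hq add1n addn1 ltnS.
have hB2 : (#|SB2| <= #|TT| * (q ^ 3 + q ^ 2 + q))%N.
  rewrite -(muln1 #|SB2|).
  apply: (@dcount _ _ TT SB2 (fun T S => (T <= S)%MS)).
    move=> S; rewrite inE => /andP[hSs /andP[p1S nex]].
    move: hSs; rewrite inE => /and4P[hS /eqP rS p2S /forallP hi].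
    have [a0 n0 h0] := nz_vec_in (hi o0).
    have [a1 n1 h1] := nz_vec_in (hi o1).
    have [a2 n2 h2] := nz_vec_in (hi o2).
    have a0S : (a0 <= S)%MS by apply: submx_trans h0 (capmxSl _ _).
    have a1S : (a1 <= S)%MS by apply: submx_trans h1 (capmxSl _ _).
    have a2S : (a2 <= S)%MS by apply: submx_trans h2 (capmxSl _ _).
    have a0E : (a0 <= E o0)%MS by apply: submx_trans h0 (capmxSr _ _).
    have a1E : (a1 <= E o1)%MS by apply: submx_trans h1 (capmxSr _ _).
    have a2E : (a2 <= E o2)%MS by apply: submx_trans h2 (capmxSr _ _).
    have a0p := notp1 _ _ _ n0 a0S p1S.
    have a1p := notp1 _ _ _ n1 a1S p1S.
    have a2p := notp1 _ _ _ n2 a2S p1S.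
    have wW : (a0, a1, a2) \in W3 by rewrite inE /good /= a0E a1E a2E a0p a1p a2p.
    have fBne : fB (a0, a1, a2) != S.
      apply/negP => e; move/negP: nex; apply; apply/exists_inP; exists (a0, a1, a2) => //.
    pose T0 := (a0 + a1 + p2)%MS.
    have a10 : ~~ (a1 <= a0)%MS.
      by apply/negP => h; move: a1p; rewrite (capP o0 o1) // (submx_trans h a0E).
    have r01 : \rank (a0 + a1)%MS = 2%N by rewrite rk // rank_rV n0.
    have p2a : ~~ (p2 <= a0 + a1)%MS.
      apply/negP => h; move: (hP2 o0 o1 isT); rewrite (submx_trans h) //.
      exact: addsmxS.
    have rT0 : \rank T0 = 3%N by rewrite /T0 rk // r01.
    have T0S : (T0 <= S)%MS by rewrite /T0 !addsmx_sub a0S a1S p2S.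
    have a2T : (a2 <= T0)%MS.
      case: (boolP (a2 <= T0)%MS) => // h; move: fBne; rewrite /fB /= -/T0.
      have e : <<(T0 + a2)%MS>>%MS = S.
        by apply: (genmx_eq hS); [rewrite addsmx_sub T0S a2S | rewrite rk // rT0 rS].
      by rewrite e eqxx.
    pose T := <<T0>>%MS.
    have s1 : (T <= S)%MS by rewrite /T genmxE.
    have s2 : \rank T = 3%N by rewrite /T genmxE.
    have s3 : (p2 <= T)%MS by rewrite /T genmxE /T0 addsmxSr.
    have s4 : ~~ (p1 <= T)%MS.
      by apply/negP => h; move: p1S; rewrite (submx_trans h s1).
    have gen : forall (a : 'rV[F]_7) j, a != 0 -> (a <= T0)%MS -> (a <= E j)%MS ->
        (0 < \rank (T :&: E j))%N.
      move=> a j a0' aT aE; apply: (@leq_trans (\rank a)); first by rewrite rank_rV a0'.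
      by apply: mxrankS; rewrite sub_capmx /T genmxE aT aE.
    apply/card_gt0P; exists T; rewrite !inE s1 andbT genmx_sub_eq s2 s3 s4 eqxx /=.
    apply/forallP => i; case: (ord3 i) => ->.
    - apply: (gen a0) => //; rewrite /T0.
      exact: submx_trans (addsmxSl a0 a1) (addsmxSl _ _).
    - apply: (gen a1) => //; rewrite /T0.
      exact: submx_trans (addsmxSr a0 a1) (addsmxSl _ _).
    - exact: (gen a2).
  move=> T; rewrite inE => /and5P[hT /eqP rT p2T p1T _].
  have hG0 := countG (submx1 T).
  have hG' : (#|oneup T 1%:M| <= q ^ 3 + q ^ 2 + q + 1)%N.
    by apply: arS q1 _; move: hG0; rewrite rT mxrank1 hq.
  have memX : <<(T + p1)%MS>>%MS \in oneup T 1%:M.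
    by rewrite /oneup inE genmx_sub_eq /= !genmxE rk // rT eqxx addsmxSl submx1.
  apply: (@leq_trans #|oneup T 1%:M :\ <<(T + p1)%MS>>%MS|); last first.
    move: hG'; rewrite (cardsD1 <<(T + p1)%MS>>%MS (oneup T 1%:M)) memX add1n.
    by rewrite addn1 ltnS.
  apply: subset_leq_card; apply/subsetP => S; rewrite !inE.
  case/andP=> /andP[hSs /andP[p1S _]] TS.
  case/and4P: hSs => hS /eqP rS _ _.
  rewrite hS rS rT eqxx TS submx1 /= andbT.
  by apply/eqP => e; move: p1S; rewrite e genmxE addsmxSr.
have cover : Sset \subset SA :|: (SB1 :|: SB2).
  apply/subsetP => S hS; rewrite inE in hS; rewrite !inE hS /=.
  by case: (p1 <= S)%MS; case: [exists w in W3, fB w == S].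
have hc := subset_leq_card cover.
rewrite !cardsU in hc.
have : (#|Sset| <= #|SA| + #|SB1| + #|SB2|)%N.
  apply: (leq_trans hc); rewrite -addnA; apply: leq_trans (leq_subr _ _) _.
  by rewrite leq_add2l leq_subr.
move=> h; apply: (leq_trans h); apply: arFinal => //.
by apply: (leq_trans hB2); rewrite leq_mul2r hTT orbT.
Qed.
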